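(* Let $\mu(x,t)=\min(F(x,t),G(x,t))$. Then for all $x_1,x_2,t>0$, $$\int_{x_1}^{x_2}m(x,t)\,dx=\mu(x_1,t)-\mu(x_2,t),$$ and for all $x,t_1,t_2>0$, $$\int_{t_1}^{t_2}q(x,t)\,dt=\mu(x,t_2)-\mu(x,t_1).$$
   Context: Standing assumptions: $u_0,u_b:[0,\infty)\to\mathbb{R}$ bounded measurable with $u_b>0$; $\rho_0,\rho_b:[0,\infty)\to(0,\infty)$ positive locally bounded measurable. For $x,t,y,\tau\ge0$: $F(y,x,t)=\int_0^y[tu_0(\eta)+\eta-x]\rho_0(\eta)\,d\eta$, $G(\tau,x,t)=\int_0^\tau[x-u_b(\eta)(t-\eta)]\rho_b(\eta)u_b(\eta)\,d\eta$, $F(x,t)=\min_{y\ge0}F(y,x,t)$, $G(x,t)=\min_{\tau\ge0}G(\tau,x,t)$ (minima attained); $y_*$ is the smallest minimizer of $F(\cdot,x,t)$ and $\tau_*$ the smallest minimizer of $G(\cdot,x,t)$. For $x,t>0$: $m(x,t)=\int_0^{y_*(x,t)}\rho_0$ and $q(x,t)=\int_0^{y_*(x,t)}\rho_0u_0$ if $F(x,t)\le G(x,t)$; $m(x,t)=-\int_0^{\tau_*(x,t)}\rho_bu_b$ and $q(x,t)=-\int_0^{\tau_*(x,t)}\rho_bu_b^2$ if $F(x,t)>G(x,t)$. *)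

(* Defs.v *)
From HB Require Import structures.
From mathcomp Require Import all_boot all_order all_algebra.
From mathcomp Require Import all_classical all_reals all_analysis.
Set Implicit Arguments. Unset Strict Implicit. Unset Printing Implicit Defensive.
Import Order.TTheory GRing.Theory Num.Theory.
Import numFieldNormedType.Exports.
Local Open Scope classical_set_scope.
Local Open Scope ring_scope.

Section Defs.
Variable R : realType.
Notation leb := (@lebesgue_measure R).

Definition Iab (a b : R) (f : R -> R) : R := \int[leb]_(z in `[a, b]) f z.

Definition oint (a b : R) (f : R -> R) : R :=
  if a <= b then Iab a b f else - Iab b a f.

Variables (u0 ub rho0 rhob : R -> R).

Definition Fyxt (y x t : R) : R :=
  Iab 0 y (fun eta => (t * u0 eta + eta - x) * rho0 eta).

Definition Gtxt (tau x t : R) : R :=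
  Iab 0 tau (fun eta => (x - ub eta * (t - eta)) * rhob eta * ub eta).

(* F(x,t) = min_{y >= 0} F(y,x,t)  (the minimum is attained, so it is the inf) *)
Definition Fmin (x t : R) : R := inf [set Fyxt y x t | y in `[0, +oo[%classic].
Definition Gmin (x t : R) : R := inf [set Gtxt tau x t | tau in `[0, +oo[%classic].

Definition ystar (x t : R) : R :=
  inf [set y | 0 <= y /\ Fyxt y x t = Fmin x t].
Definition taustar (x t : R) : R :=
  inf [set tau | 0 <= tau /\ Gtxt tau x t = Gmin x t].

Definition mdens (x t : R) : R :=
  if Fmin x t <= Gmin x t then Iab 0 (ystar x t) rho0
  else - Iab 0 (taustar x t) (fun eta => rhob eta * ub eta).

Definition qflux (x t : R) : R :=
  if Fmin x t <= Gmin x t then Iab 0 (ystar x t) (fun eta => rho0 eta * u0 eta)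
  else - Iab 0 (taustar x t) (fun eta => rhob eta * ub eta ^+ 2).

Definition mumin (x t : R) : R := Num.min (Fmin x t) (Gmin x t).

End Defs.

(* Main.v *)
Require Import Defs.
From HB Require Import structures.
From mathcomp Require Import all_boot all_order all_algebra.
From mathcomp Require Import all_classical all_reals all_analysis.
From mathcomp Require Import ring lra measurable_realfun.
Import Order.TTheory GRing.Theory Num.Theory.
Import numFieldNormedType.Exports.
Local Open Scope classical_set_scope.
Local Open Scope ring_scope.
Set Implicit Arguments. Unset Strict Implicit. Unset Printing Implicit Defensive.
Section Gen.
Variable R : realType.
Notation leb := (@lebesgue_measure R).
Implicit Types (f g : R -> R) (a b c : R).

Lemma int_bd f a b M : measurable_fun `[a, b] f ->
  (forall z, a <= z <= b -> `|f z| <= M) -> leb.-integrable `[a, b] (EFin \o f).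
Proof.
move=> mf fM; apply: measurable_bounded_integrable => //.
- by move: (lebesgue_measure_itv `[a, b]%R) => /= ->; case: ifP => _; rewrite ?ltry.
- exists M; split; first exact: num_real.
  move=> M' MM' z /=; rewrite in_itv /= => zab.
  by rewrite (le_trans (fM _ zab))// ltW.
Qed.

Lemma Iab_split f a b c : a <= c -> c <= b -> leb.-integrable `[a, b] (EFin \o f) ->
  Iab a b f = Iab a c f + Iab c b f.
Proof.
move=> ac cb intf.
have E1 : Iab a b f - Iab a c f = \int[leb]_(x in `]c, b]) f x.
  by have := @Rintegral_itvB R f (BLeft a) (BRight b) c intf; rewrite !bnd_simp; apply.
have E2 : \int[leb]_(x in `]c, b]) f x = Iab c b f.
  apply: Rintegral_itv_obnd_cbnd.
  by apply: integrableS intf => //; apply: subset_itvr; rewrite bnd_simp.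
by rewrite -E2 -E1 addrC subrK.
Qed.

Lemma Iab_bounds f a b lo hi : a <= b -> leb.-integrable `[a, b] (EFin \o f) ->
  (forall z, a <= z <= b -> lo <= f z <= hi) ->
  lo * (b - a) <= Iab a b f <= hi * (b - a).
Proof.
move=> ab intf fb.
have mu_ab : fine (leb `[a, b]) = b - a.
  rewrite lebesgue_measure_itv /=; case: ltP => [_|]; first by [].
  move=> ba; have ba' : b = a by apply/eqP; rewrite eq_le ab -lee_fin ba.
  by rewrite ba' subrr.
have icst k : leb.-integrable `[a, b] (EFin \o cst k).
  by apply: (@int_bd _ _ _ `|k|) => //.
apply/andP; split.
- rewrite -mu_ab -Rintegral_cst //; apply: le_Rintegral => //; first exact: icst.
  by move=> z; rewrite /= in_itv /= => /fb /andP[].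
- rewrite -mu_ab -Rintegral_cst //; apply: le_Rintegral => //; first exact: icst.
  move=> z.
  by rewrite /= in_itv /= => /fb /andP[].
Qed.

End Gen.
Section FTC.
Variable R : realType.
Notation leb := (@lebesgue_measure R).
Implicit Types (f g : R -> R) (a b c : R).

Variables (phi g : R -> R).
Hypothesis sg : forall x z, 0 < x -> 0 < z -> phi z <= phi x + g x * (z - x).

Lemma sg_noninc x z : 0 < x -> x <= z -> g z <= g x.
Proof.
move=> x0 xz; have z0 : 0 < z by exact: lt_le_trans xz.
have h1 := sg x0 z0; have h2 := sg z0 x0.
rewrite le_eqVlt in xz; case/orP: xz => [/eqP -> //|xz].
nra.
Qed.

Lemma sg_int a b : 0 < a -> a <= b -> leb.-integrable `[a, b] (EFin \o g).
Proof.
move=> a0 ab.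
pose gc z := g (Num.max a (Num.min z b)).
have gcn : nonincreasing_fun gc.
  move=> s t st; rewrite /gc; apply: sg_noninc.
    by rewrite lt_max a0.
  by rewrite le_max2 // le_min2.
have mgc : measurable_fun `[a, b] gc by exact: nonincreasing_measurable.
have mg : measurable_fun `[a, b] g.
  apply: eq_measurable_fun mgc => z; rewrite inE /= in_itv /= => /andP[az zb].
  by rewrite /gc (min_l zb) (max_r az).
apply: (@int_bd _ _ _ _ (`|g a| + `|g b|)) => // z /andP[az zb].
have z0 : 0 < z by exact: lt_le_trans az.
have h1 := sg_noninc a0 az; have h2 := sg_noninc z0 zb.
rewrite ler_norml; apply/andP; split.
- have := ler_norm (- g b); rewrite normrN; have := normr_ge0 (g a); lra.
- have := ler_norm (g a); have := normr_ge0 (g b); lra.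
Qed.

Lemma sg_step c d : 0 < c -> c <= d ->
  `|(Iab c d g) - (phi d - phi c)| <= (g c - g d) * (d - c).
Proof.
move=> c0 cd; have d0 : 0 < d by exact: lt_le_trans cd.
have hb : forall z, c <= z <= d -> g d <= g z <= g c.
  move=> z /andP[h1 h2]; apply/andP; split.
    exact: sg_noninc (lt_le_trans c0 h1) h2.
  exact: sg_noninc c0 h1.
have /andP[i1 i2] := Iab_bounds cd (sg_int c0 cd) hb.
have h1 := sg c0 d0; have h2 := sg d0 c0.
rewrite ler_norml; apply/andP; split; nra.
Qed.

Lemma Iab_pt f a : leb.-integrable `[a, a] (EFin \o f) -> Iab a a f = 0.
Proof.
move=> intf; have hb : forall z, a <= z <= a -> f a <= f z <= f a.
  by move=> z; rewrite -eq_le => /eqP <-; rewrite lexx.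
have /andP[] := Iab_bounds (lexx a) intf hb.
by rewrite subrr !mulr0 => h1 h2; apply/eqP; rewrite eq_le h1 h2.
Qed.

Lemma sg_partition a b h : 0 < a -> 0 < h -> forall k : nat, a + k%:R * h <= b ->
  `|Iab a (a + k%:R * h) g - (phi (a + k%:R * h) - phi a)| <= (g a - g (a + k%:R * h)) * h.
Proof.
move=> a0 h0; elim=> [|k IH] hk.
  rewrite mulr0n mul0r addr0 subrr subr0 subrr mul0r Iab_pt ?normr0 //.
  exact: sg_int.
set c := a + k%:R * h.
have Ek : a + k.+1%:R * h = c + h by rewrite /c -addn1 natrD mulrDl mul1r addrA.
rewrite Ek in hk *.
have ac : a <= c by rewrite /c lerDl mulr_ge0 // ltW.
have cb : c <= b by apply: le_trans hk; rewrite lerDl ltW.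
have c0 : 0 < c by exact: lt_le_trans ac.
have chh : c <= c + h by rewrite lerDl ltW.
have := IH cb; have := sg_step c0 chh.
rewrite (@Iab_split _ _ (a) (c + h) c) //; last by apply: sg_int => //; exact: le_trans chh.
rewrite -/c.
have -> : c + h - c = h by ring.
move=> H1 H2.
have H3 := ler_normD (Iab a c g - (phi c - phi a)) (Iab c (c + h) g - (phi (c + h) - phi c)).
have -> : Iab a c g + Iab c (c + h) g - (phi (c + h) - phi a) =
  (Iab a c g - (phi c - phi a)) + (Iab c (c + h) g - (phi (c + h) - phi c)) by ring.
lra.
Qed.

Lemma sg_ftc a b : 0 < a -> a <= b -> Iab a b g = phi b - phi a.
Proof.
move=> a0 ab; apply/eqP; rewrite -subr_eq0 -normr_eq0; apply/eqP.
set D := `|_|.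
have D0 : 0 <= D by exact: normr_ge0.
have K0 : 0 <= (g a - g b) * (b - a).
  by apply: mulr_ge0; rewrite subr_ge0 // sg_noninc.
have bound : forall n : nat, (0 < n)%N -> D * n%:R <= (g a - g b) * (b - a).
  move=> n n0; have n0' : 0 < n%:R :> R by rewrite ltr0n.
  have [ab'|ab'] := eqVneq a b.
    rewrite /D -ab' Iab_pt ?subrr ?normr0 ?mul0r ?mulr0 //.
    exact: sg_int.
  have h0 : 0 < (b - a) / n%:R.
    by apply: divr_gt0 => //; rewrite subr_gt0 lt_neqAle ab' ab.
  have := @sg_partition a b ((b - a) / n%:R) a0 h0 n.
  have -> : a + n%:R * ((b - a) / n%:R) = b.
    by rewrite mulrC -mulrA mulVf ?mulr1 ?subrKC // gt_eqF.
  move=> /(_ (lexx b)); rewrite -/D => H.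
  rewrite -(ler_pM2r n0') in H.
  by rewrite -mulrA divfK ?gt_eqF in H.
apply/eqP; rewrite eq_le D0 andbT; apply/negPn/negP; rewrite -ltNge => Dp.
set K := (g a - g b) * (b - a) in K0 bound.
have := bound (Num.trunc (K / D)).+1 isT.
have := truncnS_gt (K / D).
rewrite -(ltr_pM2l Dp) mulrCA mulfV ?gt_eqF // mulr1.
move=> H1 H2; lra.
Qed.

End FTC.
Section MinL.
Variable R : realType.

Lemma lip_cont (f : R -> R) L : 0 <= L ->
  (forall x y, `|f x - f y| <= L * `|x - y|) -> continuous f.
Proof.
move=> L0 H x; apply/cvgrPdist_lt => e e0.
have e1 : 0 < e / (L + 1) by apply: divr_gt0 => //; lra.
exists (e / (L + 1)) => //= z; rewrite /ball_ /= => hz.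
apply: (le_lt_trans (H x z)).
have := normr_ge0 (x - z).
rewrite ltr_pdivlMr in hz; last lra.
nra.
Qed.

End MinL.
Section Clamp.
Variable R : realType.
Lemma clamp_lip (Y y y' : R) : 0 <= Y ->
  `|Num.max 0 (Num.min y Y) - Num.max 0 (Num.min y' Y)| <= `|y - y'|.
Proof.
move=> Y0.
have h1 : y - y' <= `|y - y'| := ler_norm _.
have h2 : y' - y <= `|y - y'| by rewrite distrC; exact: ler_norm.
rewrite ler_norml; apply/andP.
case: (leP y Y) => h3; case: (leP y' Y) => h4;
  rewrite /Num.max; repeat (case: ifPn; rewrite -?leNgt => ?); split; lra.
Qed.
End Clamp.
Section MinA.
Variable R : realType.
Variables (Phi : R -> R) (Y : R).
Hypothesis Y0 : 0 <= Y.
Hypothesis lip : forall B, exists2 L, 0 <= L & forall y y', 0 <= y <= B -> 0 <= y' <= B ->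
  `|Phi y - Phi y'| <= L * `|y - y'|.
Hypothesis evinc : forall y, Y <= y -> Phi Y <= Phi y.

Lemma min_lb : forall y, 0 <= y -> inf [set Phi y | y in `[0, +oo[%classic] <= Phi y.
Proof.
have [L L0 HL] := lip Y.
move=> y y0; apply: ge_inf; last by exists y => //=; rewrite in_itv /= y0.
exists (Phi 0 - L * Y) => _ [z /= + <-]; rewrite in_itv /= andbT => z0.
have key : forall w, 0 <= w <= Y -> Phi 0 - L * Y <= Phi w.
  move=> w /andP[w0 wY]; have := HL w 0 (introT andP (conj w0 wY)).
  rewrite lexx Y0 subr0 (ger0_norm w0) => /(_ isT).
  rewrite ler_norml => /andP[h1 h2]; nra.
case: (leP z Y) => zY; first by apply: key; rewrite z0 zY.
apply: le_trans (evinc (ltW zY)); apply: key; by rewrite Y0 lexx.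
Qed.

Lemma min_exists : exists2 c, 0 <= c & Phi c = inf [set Phi y | y in `[0, +oo[%classic].
Proof.
have [L L0 HL] := lip Y.
pose cl y := Num.max 0 (Num.min y Y).
have cl01 : forall y, 0 <= cl y <= Y.
  move=> y; rewrite /cl le_max lexx /= ge_max Y0 /=; by rewrite ge_min lexx orbT.
have clid : forall y, 0 <= y <= Y -> cl y = y.
  by move=> y /andP[y0 yY]; rewrite /cl (min_l yY) (max_r y0).
pose Psi y := Phi (cl y).
have cPsi : continuous Psi.
  apply: (@lip_cont _ _ L) => // x y; rewrite /Psi.
  apply: le_trans (HL _ _ (cl01 x) (cl01 y)) _.
  by rewrite ler_wpM2l // clamp_lip.
have [c cin cmin] := EVT_min Y0 (continuous_subspaceT cPsi).
have c01 : 0 <= c <= Y by move: cin; rewrite in_itv.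
have Pc : forall y, 0 <= y -> Phi c <= Phi y.
  move=> y y0; have <- : Psi c = Phi c by rewrite /Psi clid.
  case: (leP y Y) => yY.
    by rewrite -(clid y) ?y0 ?yY //; apply: cmin; rewrite in_itv /= y0 yY.
  apply: le_trans (evinc (ltW yY)).
  have <- : Psi Y = Phi Y by rewrite /Psi clid ?Y0 ?lexx.
  by apply: cmin; rewrite in_itv /= Y0 lexx.
case/andP: c01 => c0 cY.
exists c => //; apply/eqP; rewrite eq_le min_lb // andbT.
apply: lb_le_inf; first by exists (Phi c), c => //=; rewrite in_itv /= c0.
by move=> _ [z /= + <-]; rewrite in_itv /= andbT => z0; apply: Pc.
Qed.

Lemma ystar_min :
  let m := inf [set Phi y | y in `[0, +oo[%classic] in
  0 <= inf [set y | 0 <= y /\ Phi y = m] /\ Phi (inf [set y | 0 <= y /\ Phi y = m]) = m.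
Proof.
move=> m; set S := [set y | 0 <= y /\ Phi y = m].
have [c c0 Pc] := min_exists.
have Sne : S !=set0 by exists c; split.
have Slb : has_lbound S by exists 0 => y [].
have ys0 : 0 <= inf S by apply: lb_le_inf => // y [].
split => //.
apply/eqP; rewrite eq_le min_lb // andbT; rewrite leNgt; apply/negP => hlt.
have [L L0 HL] := lip (inf S + 1).
set eps := Num.min 1 ((Phi (inf S) - m) / (L + 1)).
have eps0 : 0 < eps by rewrite lt_min ltr01 /= divr_gt0 // ?subr_gt0 //; lra.
have [s [s0 Ps] slt] := inf_adherent eps0 (conj Sne Slb).
have sge : inf S <= s by apply: ge_inf.
have e1 : eps <= 1 by rewrite ge_min lexx.
have e2 : eps * (L + 1) <= Phi (inf S) - m.
  rewrite -ler_pdivlMr; last lra.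
  by rewrite ge_min lexx orbT.
have := HL s (inf S); rewrite s0 ys0 /=.
have -> : s <= inf S + 1 by lra.
have ha : inf S <= inf S + 1 by lra.
have hs : 0 <= s - inf S by lra.
move=> /(_ isT ha); rewrite Ps (ger0_norm hs).
rewrite ler_norml => /andP[h1 h2].
have h3 : L * (s - inf S) <= L * eps by apply: ler_wpM2l => //; lra.
lra.
Qed.

End MinA.
Section Loc.
Variable R : realType.
Notation leb := (@lebesgue_measure R).
Implicit Types (f g h : R -> R).

Definition locb f := forall B : R, exists K : R, forall y, 0 <= y <= B -> `|f y| <= K.
Definition mfp f := measurable_fun (`[0, +oo[%classic : set R) f.

Lemma locb_mul f g : locb f -> locb g -> locb (fun y => f y * g y).
Proof.
move=> hf hg B; have [K1 h1] := hf B; have [K2 h2] := hg B.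
exists (K1 * K2) => y hy; rewrite normrM; apply: ler_pM => //; by [apply: h1|apply: h2].
Qed.

Lemma locb_add f g : locb f -> locb g -> locb (fun y => f y + g y).
Proof.
move=> hf hg B; have [K1 h1] := hf B; have [K2 h2] := hg B.
exists (K1 + K2) => y hy; apply: le_trans (ler_normD _ _) _; apply: lerD; by [apply: h1|apply: h2].
Qed.

Lemma locb_opp f : locb f -> locb (fun y => - f y).
Proof. by move=> hf B; have [K h] := hf B; exists K => y hy; rewrite normrN; apply: h. Qed.

Lemma locb_cst c : locb (fun _ => c).
Proof. by move=> B; exists `|c|. Qed.

Lemma locb_id : locb id.
Proof. by move=> B; exists B => y /andP[y0 yB]; rewrite ger0_norm. Qed.

Lemma mfp_mul f g : mfp f -> mfp g -> mfp (fun y => f y * g y).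
Proof. by move=> hf hg; apply: measurable_funM. Qed.
Lemma mfp_add f g : mfp f -> mfp g -> mfp (fun y => f y + g y).
Proof. by move=> hf hg; apply: measurable_funD. Qed.
Lemma mfp_opp f : mfp f -> mfp (fun y => - f y).
Proof. by move=> hf; apply: measurable_funN. Qed.
Lemma mfp_cst c : mfp (fun _ => c).
Proof. exact: measurable_cst. Qed.
Lemma mfp_id : mfp id.
Proof. exact: measurable_id. Qed.

Lemma int_loc f a b : 0 <= a -> mfp f -> locb f -> leb.-integrable `[a, b] (EFin \o f).
Proof.
move=> a0 mf lf; have [K hK] := lf b.
apply: (@int_bd _ _ _ _ K).
  apply: measurable_funS mf => //; apply: subset_itv; by rewrite bnd_simp.
by move=> z /andP[az zb]; apply: hK; rewrite zb (le_trans a0 az).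
Qed.

Lemma Iab_lin a b f1 f2 h c : 0 <= a -> mfp f1 -> locb f1 -> mfp f2 -> locb f2 ->
  mfp h -> locb h -> (forall y, f1 y - f2 y = c * h y) ->
  Iab a b f1 - Iab a b f2 = c * Iab a b h.
Proof.
move=> a0 m1 l1 m2 l2 mh lh E.
rewrite /Iab -RintegralB //; try exact: int_loc.
rewrite -RintegralZl //; last exact: int_loc.
by apply: eq_Rintegral => y _; exact: E.
Qed.

Lemma Iab0_lip f : mfp f -> locb f -> forall B, exists2 L, 0 <= L &
  forall y y', 0 <= y <= B -> 0 <= y' <= B -> `|Iab 0 y f - Iab 0 y' f| <= L * `|y - y'|.
Proof.
move=> mf lf B; have [K hK] := lf B.
exists `|K| => // y y'.
wlog yy' : y y' / y <= y'.
  move=> W hy hy'; case: (leP y y') => h; first exact: W.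
  by rewrite distrC (distrC y); apply: W => //; exact: ltW.
move=> /andP[y0 yB] /andP[y'0 y'B].
rewrite (@Iab_split _ _ 0 y' y) //; last exact: int_loc.
have hb : forall z, y <= z <= y' -> - `|K| <= f z <= `|K|.
  move=> z /andP[yz zy']; rewrite -ler_norml; apply: le_trans (ler_norm K).
  by apply: hK; rewrite (le_trans y0 yz) (le_trans zy' y'B).
have /andP[h1 h2] := Iab_bounds yy' (@int_loc f y y' y0 mf lf) hb.
rewrite opprD addNKr normrN distrC (ger0_norm (_ : 0 <= y' - y)); last by rewrite subr_ge0.
rewrite ler_norml h2 andbT; lra.
Qed.

Lemma Iab0_evinc f Y : 0 <= Y -> mfp f -> locb f -> (forall y, Y <= y -> 0 <= f y) ->
  forall y, Y <= y -> Iab 0 Y f <= Iab 0 y f.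
Proof.
move=> Y0 mf lf fp y Yy.
rewrite (@Iab_split _ _ 0 y Y) //; last exact: int_loc.
have [K hK] := lf y.
have hb : forall z, Y <= z <= y -> 0 <= f z <= `|K|.
  move=> z /andP[Yz zy]; rewrite fp //=; apply: le_trans (ler_norm _) _.
  apply: le_trans (ler_norm K); apply: hK; by rewrite zy (le_trans Y0 Yz).
have /andP[h1 _] := Iab_bounds Yy (@int_loc f Y y Y0 mf lf) hb.
by rewrite lerDl; rewrite mul0r in h1.
Qed.

End Loc.
Lemma Iab_opp (R : realType) (a b : R) (g : R -> R) :
  (@lebesgue_measure R).-integrable `[a, b] (EFin \o g) ->
  Iab a b (fun x => - g x) = - Iab a b g.
Proof.
move=> ig.
have i0 : (@lebesgue_measure R).-integrable `[a, b] (EFin \o cst (0:R)).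
  by apply: (@int_bd _ _ _ _ 0) => // z _; rewrite normr0.
have -> : Iab a b (fun x => - g x) = Iab a b (fun x => cst 0 x - g x).
  by congr Iab; apply/funext => x; rewrite /cst sub0r.
by rewrite /Iab RintegralB // Rintegral_cst // mul0r sub0r.
Qed.

Ltac mfp_tac := repeat first [ apply: mfp_mul | apply: mfp_add | apply: mfp_opp
   | exact: mfp_cst | exact: mfp_id | assumption ].
Ltac locb_tac := repeat first [ apply: locb_mul | apply: locb_add | apply: locb_opp
   | exact: locb_cst | exact: locb_id | assumption ].

Section Main.
Variable R : realType.
Variables (u0 ub rho0 rhob : R -> R) (Mu Mb : R).
Hypotheses (mu0 : mfp u0) (mub : mfp ub) (mr0 : mfp rho0) (mrb : mfp rhob).
Hypotheses (hMu : forall y, 0 <= y -> `|u0 y| <= Mu) (hMb : forall y, 0 <= y -> `|ub y| <= Mb).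
Hypotheses (ubp : forall y, 0 <= y -> 0 < ub y) (r0p : forall y, 0 <= y -> 0 < rho0 y)
  (rbp : forall y, 0 <= y -> 0 < rhob y) (r0l : locb rho0) (rbl : locb rhob).

Let lu0 : locb u0. Proof. by move=> B; exists Mu => y /andP[y0 _]; apply: hMu. Qed.
Let lub : locb ub. Proof. by move=> B; exists Mb => y /andP[y0 _]; apply: hMb. Qed.

Lemma F_props x t : 0 < x -> 0 < t ->
  [/\ 0 <= ystar u0 rho0 x t, Fyxt u0 rho0 (ystar u0 rho0 x t) x t = Fmin u0 rho0 x t
    & forall y, 0 <= y -> Fmin u0 rho0 x t <= Fyxt u0 rho0 y x t].
Proof.
move=> x0 t0.
pose f := fun y => (t * u0 y + y - x) * rho0 y.
have mf : mfp f by rewrite /f; mfp_tac.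
have lf : locb f by rewrite /f; locb_tac.
pose Y := `|x| + t * `|Mu|.
have Y0 : 0 <= Y by rewrite /Y addr_ge0 // mulr_ge0 // ltW.
have fp : forall y, Y <= y -> 0 <= f y.
  move=> y Yy; have y0 : 0 <= y by exact: le_trans Y0 Yy.
  rewrite /f; apply: mulr_ge0; last exact: ltW (r0p y0).
  have := hMu y0; rewrite ler_norml => /andP[h1 h2].
  have := ler_norm Mu; have := ler_norm x; rewrite /Y in Yy; nra.
have lip := Iab0_lip mf lf.
have evinc := Iab0_evinc Y0 mf lf fp.
have [H1 H2] := @ystar_min R (fun y => Fyxt u0 rho0 y x t) Y Y0 lip evinc.
split => //.
exact: (@min_lb R (fun y => Fyxt u0 rho0 y x t) Y Y0 lip evinc).
Qed.

Lemma G_props x t : 0 < x -> 0 < t ->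
  [/\ 0 <= taustar ub rhob x t, Gtxt ub rhob (taustar ub rhob x t) x t = Gmin ub rhob x t
    & forall y, 0 <= y -> Gmin ub rhob x t <= Gtxt ub rhob y x t].
Proof.
move=> x0 t0.
pose f := fun y => (x - ub y * (t - y)) * rhob y * ub y.
have mf : mfp f by rewrite /f; mfp_tac.
have lf : locb f by rewrite /f; locb_tac.
have Y0 : 0 <= t by exact: ltW.
have fp : forall y, t <= y -> 0 <= f y.
  move=> y Yy; have y0 : 0 <= y by exact: le_trans Y0 Yy.
  rewrite /f; apply: mulr_ge0; last exact: ltW (ubp y0).
  apply: mulr_ge0; last exact: ltW (rbp y0).
  have := ubp y0; nra.
have lip := Iab0_lip mf lf.
have evinc := Iab0_evinc Y0 mf lf fp.
have [H1 H2] := @ystar_min R (fun y => Gtxt ub rhob y x t) t Y0 lip evinc.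
split => //.
exact: (@min_lb R (fun y => Gtxt ub rhob y x t) t Y0 lip evinc).
Qed.


Lemma sg_x t : 0 < t -> forall x z, 0 < x -> 0 < z ->
  mumin u0 ub rho0 rhob z t <=
  mumin u0 ub rho0 rhob x t + (- mdens u0 ub rho0 rhob x t) * (z - x).
Proof.
move=> t0 x z x0 z0; rewrite /mumin /mdens; case: ifP => hFG.
- rewrite (min_l hFG).
  have [y0 Ey _] := F_props x0 t0; have [_ _ Fl] := F_props z0 t0.
  set y := ystar u0 rho0 x t in y0 Ey *.
  have E : Fyxt u0 rho0 y z t - Fyxt u0 rho0 y x t = (x - z) * Iab 0 y rho0.
    apply: Iab_lin => //; try (by mfp_tac); try (by locb_tac).
    by move=> w; ring.
  rewrite ge_min; apply/orP; left.
  apply: le_trans (Fl y y0) _; rewrite -Ey; lra.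
- have hGF : Gmin ub rhob x t <= Fmin u0 rho0 x t by rewrite leNgt; apply/negP => h; move: hFG; rewrite (ltW h).
  rewrite (min_r hGF).
  have [y0 Ey _] := G_props x0 t0; have [_ _ Gl] := G_props z0 t0.
  set y := taustar ub rhob x t in y0 Ey *.
  have E : Gtxt ub rhob y z t - Gtxt ub rhob y x t = (z - x) * Iab 0 y (fun w => rhob w * ub w).
    apply: Iab_lin => //; try (by mfp_tac); try (by locb_tac).
    by move=> w; ring.
  rewrite ge_min; apply/orP; right.
  apply: le_trans (Gl y y0) _; rewrite -Ey; lra.
Qed.

Lemma sg_t x : 0 < x -> forall t s, 0 < t -> 0 < s ->
  mumin u0 ub rho0 rhob x s <=
  mumin u0 ub rho0 rhob x t + qflux u0 ub rho0 rhob x t * (s - t).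
Proof.
move=> x0 t s t0 s0; rewrite /mumin /qflux; case: ifP => hFG.
- rewrite (min_l hFG).
  have [y0 Ey _] := F_props x0 t0; have [_ _ Fl] := F_props x0 s0.
  set y := ystar u0 rho0 x t in y0 Ey *.
  have E : Fyxt u0 rho0 y x s - Fyxt u0 rho0 y x t = (s - t) * Iab 0 y (fun w => rho0 w * u0 w).
    apply: Iab_lin => //; try (by mfp_tac); try (by locb_tac).
    by move=> w; ring.
  rewrite ge_min; apply/orP; left.
  apply: le_trans (Fl y y0) _; rewrite -Ey; lra.
- have hGF : Gmin ub rhob x t <= Fmin u0 rho0 x t by rewrite leNgt; apply/negP => h; move: hFG; rewrite (ltW h).
  rewrite (min_r hGF).
  have [y0 Ey _] := G_props x0 t0; have [_ _ Gl] := G_props x0 s0.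
  set y := taustar ub rhob x t in y0 Ey *.
  have E : Gtxt ub rhob y x s - Gtxt ub rhob y x t = (t - s) * Iab 0 y (fun w => rhob w * ub w ^+ 2).
    apply: Iab_lin => //; try (by mfp_tac); try (by locb_tac).
    by move=> w; ring.
  rewrite ge_min; apply/orP; right.
  apply: le_trans (Gl y y0) _; rewrite -Ey; lra.
Qed.

End Main.
Unset Implicit Arguments.
Set Strict Implicit.

Theorem lemma3p5 (R : realType) (u0 ub rho0 rhob : R -> R) :
  (* u0, ub bounded measurable on [0,oo), ub > 0 *)
  measurable_fun (`[0, +oo[%classic : set R) u0 ->
  measurable_fun (`[0, +oo[%classic : set R) ub ->
  (exists M : R, forall y, 0 <= y -> `|u0 y| <= M) ->
  (exists M : R, forall y, 0 <= y -> `|ub y| <= M) ->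
  (forall y, 0 <= y -> 0 < ub y) ->
  (* rho0, rhob positive, locally bounded, measurable on [0,oo) *)
  measurable_fun (`[0, +oo[%classic : set R) rho0 ->
  measurable_fun (`[0, +oo[%classic : set R) rhob ->
  (forall y, 0 <= y -> 0 < rho0 y) ->
  (forall y, 0 <= y -> 0 < rhob y) ->
  (forall b : R, exists M : R, forall y, 0 <= y <= b -> `|rho0 y| <= M) ->
  (forall b : R, exists M : R, forall y, 0 <= y <= b -> `|rhob y| <= M) ->
  (forall x1 x2 t : R, 0 < x1 -> 0 < x2 -> 0 < t ->
     oint x1 x2 (fun x => mdens u0 ub rho0 rhob x t)
     = mumin u0 ub rho0 rhob x1 t - mumin u0 ub rho0 rhob x2 t) /\
  (forall x t1 t2 : R, 0 < x -> 0 < t1 -> 0 < t2 ->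
     oint t1 t2 (fun t => qflux u0 ub rho0 rhob x t)
     = mumin u0 ub rho0 rhob x t2 - mumin u0 ub rho0 rhob x t1).
Proof.
move=> mu0 mub [Mu hMu] [Mb hMb] ubp mr0 mrb r0p rbp r0l rbl.
split.
- move=> x1 x2 t x10 x20 t0.
  have SG : forall x z, 0 < x -> 0 < z -> mumin u0 ub rho0 rhob z t <=
      mumin u0 ub rho0 rhob x t + (- mdens u0 ub rho0 rhob x t) * (z - x).
    exact: (sg_x mu0 mub mr0 mrb hMu hMb ubp r0p rbp r0l rbl t0).
  have Em : forall a b, Iab a b (fun x => mdens u0 ub rho0 rhob x t) =
      Iab a b (fun x => - (- mdens u0 ub rho0 rhob x t)).
    by move=> a b; congr Iab; apply/funext => x; rewrite opprK.
  rewrite /oint; case: ifP => h12.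
  + have I := @sg_ftc R (fun x => mumin u0 ub rho0 rhob x t)
      (fun x => - mdens u0 ub rho0 rhob x t) SG x1 x2 x10 h12.
    have Int := @sg_int R _ _ SG x1 x2 x10 h12.
    by rewrite Em Iab_opp // I opprB.
  + have h21 : x2 <= x1 by rewrite leNgt; apply/negP => h; move: h12; rewrite (ltW h).
    have I := @sg_ftc R (fun x => mumin u0 ub rho0 rhob x t)
      (fun x => - mdens u0 ub rho0 rhob x t) SG x2 x1 x20 h21.
    have Int := @sg_int R _ _ SG x2 x1 x20 h21.
    by rewrite Em Iab_opp // I opprK.
- move=> x t1 t2 x0 t10 t20.
  have SG : forall t s, 0 < t -> 0 < s -> mumin u0 ub rho0 rhob x s <=
      mumin u0 ub rho0 rhob x t + qflux u0 ub rho0 rhob x t * (s - t).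
    exact: (sg_t mu0 mub mr0 mrb hMu hMb ubp r0p rbp r0l rbl x0).
  rewrite /oint; case: ifP => h12.
  + exact: (@sg_ftc R (fun t => mumin u0 ub rho0 rhob x t)
      (fun t => qflux u0 ub rho0 rhob x t) SG t1 t2 t10 h12).
  + have h21 : t2 <= t1 by rewrite leNgt; apply/negP => h; move: h12; rewrite (ltW h).
    by rewrite (@sg_ftc R (fun t => mumin u0 ub rho0 rhob x t)
      (fun t => qflux u0 ub rho0 rhob x t) SG t2 t1 t20 h21) opprB.
Qed.
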